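(* Let $A, B \subseteq \omega$ be infinite. Then there is a single enumeration functional $\Psi$ with $\Psi(C) = A$ for every infinite $C \subseteq B$ if and only if there is a single relative c.e. operator $\Theta$ with $\Theta(C) = A$ for every infinite $C\subseteq B$.
   Context: An enumeration functional is a c.e. set $\Psi$ of pairs $(E,F)$ of finite subsets of $\omega$, with $\Psi(X) = \bigcup\{F : \exists E\subseteq X\ (E,F)\in\Psi\}$ (it uses only positive information about $X$). A relative c.e. operator is a c.e. set $\Theta$ of pairs $(\sigma,x)\in 2^{<\omega}\times\omega$, with $\Theta(X)$ the set of $x$ such that $(\sigma,x)\in\Theta$ for some initial segment $\sigma$ of the characteristic function of $X$ (it may use both positive and negative information). *)

(* Defs.v *)
From Stdlib Require Import Arith List.
Import ListNotations.

(** Syntax of partial recursive function codes. Arity is not enforced; the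
    argument is a list of naturals. *)
Inductive prf : Type :=
| PZero : prf
| PSucc : prf
| PProj : nat -> prf
| PComp : prf -> list prf -> prf
| PPrec : prf -> prf -> prf
| PMu   : prf -> prf.

Inductive eval : prf -> list nat -> nat -> Prop :=
| ev_zero v : eval PZero v 0
| ev_succ x v : eval PSucc (x :: v) (S x)
| ev_proj i v : i < length v -> eval (PProj i) v (nth i v 0)
| ev_comp f gs v ws y : evals gs v ws -> eval f ws y -> eval (PComp f gs) v y
| ev_prec0 f g v y : eval f v y -> eval (PPrec f g) (0 :: v) y
| ev_precS f g n v y z :
    eval (PPrec f g) (n :: v) y -> eval g (n :: y :: v) z ->
    eval (PPrec f g) (S n :: v) z
| ev_mu f v y :
    eval f (y :: v) 0 ->
    (forall z, z < y -> exists k, eval f (z :: v) (S k)) ->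
    eval (PMu f) v y
with evals : list prf -> list nat -> list nat -> Prop :=
| evs_nil v : evals [] v []
| evs_cons g gs v w ws : eval g v w -> evals gs v ws -> evals (g :: gs) v (w :: ws).

Definition ce2 (R : nat -> nat -> Prop) : Prop :=
  exists c : prf, forall a b, R a b <-> exists y, eval c [a; b] y.

Definition infinite (X : nat -> Prop) : Prop :=
  forall n, exists m, n <= m /\ X m.

(** Canonical index of finite sets: e codes D_e = { i | bit i of e is 1 }. *)
Definition canon (e : nat) (i : nat) : Prop := Nat.testbit e i = true.

(** Enumeration functional: a c.e. set Psi of pairs (E,F) of finite sets,
    given via canonical indices (e,f).
    Psi(X) = union of F over (E,F) in Psi with E subset of X. *)
Definition enum_apply (Psi : nat -> nat -> Prop) (X : nat -> Prop) (x : nat) : Prop :=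
  exists e f, Psi e f /\ (forall i, canon e i -> X i) /\ canon f x.

(** Binary strings are coded by positive naturals: n >= 1 with binary
    expansion 1 b_{l-1} ... b_0 codes the string sigma = b_0 b_1 ... b_{l-1}
    of length l = log2 n (so sigma(i) = bit i of n for i < l).
    [init_seg n X] : n codes an initial segment of the characteristic
    function of X. *)
Definition init_seg (n : nat) (X : nat -> Prop) : Prop :=
  0 < n /\ forall i, i < Nat.log2 n -> (Nat.testbit n i = true <-> X i).

Definition rel_apply (Theta : nat -> nat -> Prop) (X : nat -> Prop) (x : nat) : Prop :=
  exists n, Theta n x /\ init_seg n X.

(* Main.v *)
Require Import Defs.
From Stdlib Require Import Arith Lia List Classical.
Import ListNotations.

Fixpoint prf_ind' (P : prf -> Prop)
  (H0 : P PZero) (H1 : P PSucc) (H2 : forall i, P (PProj i))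
  (H3 : forall f gs, P f -> Forall P gs -> P (PComp f gs))
  (H4 : forall f g, P f -> P g -> P (PPrec f g))
  (H5 : forall f, P f -> P (PMu f)) (c : prf) {struct c} : P c :=
  match c with
  | PZero => H0 | PSucc => H1 | PProj i => H2 i
  | PComp f gs => H3 f gs (prf_ind' P H0 H1 H2 H3 H4 H5 f)
      ((fix go (l : list prf) : Forall P l :=
         match l with
         | [] => Forall_nil _
         | g :: l' => Forall_cons _ (prf_ind' P H0 H1 H2 H3 H4 H5 g) (go l')
         end) gs)
  | PPrec f g => H4 f g (prf_ind' P H0 H1 H2 H3 H4 H5 f) (prf_ind' P H0 H1 H2 H3 H4 H5 g)
  | PMu f => H5 f (prf_ind' P H0 H1 H2 H3 H4 H5 f)
  end.

Lemma eval_det : forall c v y y', eval c v y -> eval c v y' -> y = y'.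
Proof.
  induction c as [| |i|f gs IHf IHgs|f g IHf IHg|f IHf] using prf_ind';
    intros v y y' H H'.
  - inversion H; inversion H'; subst; auto.
  - inversion H; inversion H'; subst; congruence.
  - inversion H; inversion H'; subst; congruence.
  - inversion H as [| | |? ? ? ws ? E1 F1| | | ]; subst.
    inversion H' as [| | |? ? ? ws0 ? E2 F2| | | ]; subst.
    assert (ws = ws0).
    { clear - IHgs E1 E2. revert ws ws0 E1 E2.
      induction IHgs as [|g gs Hg Hgs IH]; intros ws ws0 E1 E2.
      - inversion E1; inversion E2; auto.
      - inversion E1; inversion E2; subst. f_equal; eauto. }
    subst; eauto.
  - destruct v as [|n v]; [inversion H|].
    revert y y' H H'. induction n as [|n IHn]; intros y y' H H'.
    + inversion H; subst; inversion H'; subst; eauto.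
    + inversion H; subst; inversion H'; subst.
      match goal with A : eval (PPrec f g) (n :: v) ?a, B : eval (PPrec f g) (n :: v) ?b |- _ =>
        assert (a = b) by (eapply IHn; eauto) end. subst. eauto.
  - inversion H as [| | | | | |? ? ? H1 H2]; subst; inversion H' as [| | | | | |? ? ? H6 H7]; subst.
    destruct (lt_eq_lt_dec y y') as [[Hl|]|Hl]; auto.
    + destruct (H7 _ Hl) as [k Hk]. specialize (IHf _ _ _ H1 Hk). discriminate.
    + destruct (H2 _ Hl) as [k Hk]. specialize (IHf _ _ _ H6 Hk). discriminate.
Qed.

Definition PR (m : nat) (F : list nat -> nat) : Prop :=
  exists c, forall v, length v = m -> eval c v (F v).

Lemma PR_ext m F F' : PR m F -> (forall v, length v = m -> F v = F' v) -> PR m F'.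
Proof. intros [c Hc] E. exists c. intros v Hv. rewrite <- E by auto. auto. Qed.

Fixpoint constc (k : nat) : prf :=
  match k with 0 => PZero | S k => PComp PSucc [constc k] end.

Lemma PR_const m k : PR m (fun _ => k).
Proof.
  exists (constc k). intros v _. induction k; simpl.
  - constructor.
  - econstructor. constructor; [eauto|constructor]. constructor.
Qed.

Lemma PR_proj m i : i < m -> PR m (fun v => nth i v 0).
Proof. intros Hi. exists (PProj i). intros v Hv. constructor. lia. Qed.

Lemma PR_codes m Gs : Forall (PR m) Gs ->
  exists cs, forall v, length v = m -> evals cs v (map (fun G => G v) Gs).
Proof.
  induction 1 as [|G Gs [c Hc] _ [cs Hcs]].
  - exists []. intros; constructor.
  - exists (c :: cs). intros; simpl; constructor; auto.
Qed.

Lemma PR_compl m k F Gs : PR k F -> Forall (PR m) Gs -> length Gs = k ->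
  PR m (fun v => F (map (fun G => G v) Gs)).
Proof.
  intros [cf Hf] HG Hl. destruct (PR_codes _ _ HG) as [cs Hcs].
  exists (PComp cf cs). intros v Hv. econstructor; eauto.
  apply Hf. rewrite length_map; auto.
Qed.

Lemma PR_compl' m k F Gs H : PR k F -> Forall (PR m) Gs -> length Gs = k ->
  (forall v, length v = m -> F (map (fun G => G v) Gs) = H v) -> PR m H.
Proof. intros; eapply PR_ext; [eapply PR_compl|]; eauto. Qed.

Lemma PR_prec m F G : PR m F -> PR (S (S m)) G ->
  PR (S m) (fun w => nat_rect (fun _ => nat) (F (tl w)) (fun k y => G (k :: y :: tl w)) (hd 0 w)).
Proof.
  intros [cf Hf] [cg Hg]. exists (PPrec cf cg). intros [|n v] Hv; simpl in Hv; [lia|].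
  simpl. induction n; simpl.
  - constructor. apply Hf. lia.
  - econstructor; eauto. apply Hg. simpl. lia.
Qed.

Lemma map_nth_seq v k n : length v = k + n ->
  map (fun i => nth i v 0) (seq k n) = skipn k v.
Proof.
  revert k n. induction v as [|a v IH]; intros k n Hl.
  - simpl in Hl. assert (k = 0) by lia; assert (n = 0) by lia; subst; reflexivity.
  - destruct k as [|k].
    + destruct n as [|n]; simpl in Hl; [lia|]. simpl. f_equal.
      rewrite <- seq_shift, map_map. simpl. rewrite IH by (simpl; lia). reflexivity.
    + simpl. rewrite <- seq_shift, map_map. simpl. apply IH. simpl in Hl; lia.
Qed.

Lemma Forall_projs m k n : k + n <= m ->
  Forall (PR m) (map (fun i v => nth i v 0) (seq k n)).
Proof.
  intros H. apply Forall_forall. intros G HG. apply in_map_iff in HG as [i [<- Hi]].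
  apply in_seq in Hi. apply PR_proj. lia.
Qed.

Lemma map_projs v k n : length v = k + n ->
  map (fun G => G v) (map (fun i v => nth i v 0) (seq k n)) = skipn k v.
Proof. intros. rewrite map_map. apply map_nth_seq; auto. Qed.

Lemma PR_rec m (h : nat -> list nat -> nat) F G X :
  PR m F -> PR (S (S m)) G ->
  (forall v, length v = m -> h 0 v = F v) ->
  (forall k v, length v = m -> h (S k) v = G (k :: h k v :: v)) ->
  PR m X -> PR m (fun v => h (X v) v).
Proof.
  intros HF HG E0 ES HX.
  pose proof (PR_prec _ _ _ HF HG) as HP.
  eapply (PR_compl' m (S m) _ (X :: map (fun i v => nth i v 0) (seq 0 m))); eauto.
  - constructor; auto. apply Forall_projs; lia.
  - simpl. rewrite length_map, length_seq; auto.
  - intros v Hv. simpl. rewrite map_projs by lia. simpl.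
    induction (X v) as [|n IHn]; simpl; [rewrite E0 by auto; auto|]. rewrite ES by auto. rewrite IHn. auto.
Qed.

Lemma PR_app1 (f : nat -> nat) : PR 1 (fun v => f (nth 0 v 0)) ->
  forall m X, PR m X -> PR m (fun v => f (X v)).
Proof. intros H m X HX. eapply (PR_compl' m 1 _ [X]); eauto. Qed.

Lemma PR_app2 (f : nat -> nat -> nat) : PR 2 (fun v => f (nth 0 v 0) (nth 1 v 0)) ->
  forall m X Y, PR m X -> PR m Y -> PR m (fun v => f (X v) (Y v)).
Proof. intros H m X Y HX HY. eapply (PR_compl' m 2 _ [X; Y]); eauto. Qed.

Lemma PR_S0 : PR 1 (fun v => S (nth 0 v 0)).
Proof. exists PSucc. intros [|x [|]] H; simpl in H; try lia. constructor. Qed.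

Lemma PR_S m X : PR m X -> PR m (fun v => S (X v)).
Proof. apply (PR_app1 S PR_S0). Qed.

Lemma PR_pred m X : PR m X -> PR m (fun v => pred (X v)).
Proof.
  apply PR_app1.
  apply (PR_rec 1 (fun k v => pred k) (fun _ => 0) (fun w => nth 0 w 0)).
  - apply PR_const.
  - apply PR_proj; lia.
  - reflexivity.
  - reflexivity.
  - apply PR_proj; lia.
Qed.

Lemma PR_add m X Y : PR m X -> PR m Y -> PR m (fun v => X v + Y v).
Proof.
  apply PR_app2.
  apply (PR_rec 2 (fun k v => k + nth 1 v 0) (fun v => nth 1 v 0) (fun w => S (nth 1 w 0))).
  - apply PR_proj; lia.
  - apply PR_S, PR_proj; lia.
  - reflexivity.
  - reflexivity.
  - apply PR_proj; lia.
Qed.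

Lemma PR_mul m X Y : PR m X -> PR m Y -> PR m (fun v => X v * Y v).
Proof.
  apply PR_app2.
  apply (PR_rec 2 (fun k v => k * nth 1 v 0) (fun v => 0) (fun w => nth 3 w 0 + nth 1 w 0)).
  - apply PR_const.
  - apply PR_add; apply PR_proj; lia.
  - reflexivity.
  - intros k v Hv. cbn [nth]. nia.
  - apply PR_proj; lia.
Qed.

Lemma PR_sub m X Y : PR m X -> PR m Y -> PR m (fun v => X v - Y v).
Proof.
  intros HX HY.
  apply (PR_app2 (fun a b => a - b)); auto.
  apply (PR_rec 2 (fun k v => nth 0 v 0 - k) (fun v => nth 0 v 0) (fun w => pred (nth 1 w 0))
           (fun v => nth 1 v 0)).
  - apply PR_proj; lia.
  - apply PR_pred, PR_proj; lia.
  - intros; lia.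
  - intros k v Hv. simpl. lia.
  - apply PR_proj; lia.
Qed.

Lemma PR_cond m X Y Z : PR m X -> PR m Y -> PR m Z ->
  PR m (fun v => if X v =? 0 then Y v else Z v).
Proof.
  intros HX HY HZ.
  eapply PR_ext.
  - apply PR_add; apply PR_mul.
    + apply PR_sub; [apply (PR_const _ 1)|exact HX].
    + exact HY.
    + apply PR_sub; [apply (PR_const _ 1)|]. apply PR_sub; [apply (PR_const _ 1)|exact HX].
    + exact HZ.
  - intros v _. simpl. destruct (X v); simpl; lia.
Qed.

Lemma PR_condeq m X K Y Z : PR m X -> PR m K -> PR m Y -> PR m Z ->
  PR m (fun v => if X v =? K v then Y v else Z v).
Proof.
  intros HX HK HY HZ.
  eapply PR_ext.
  - apply PR_cond; [|exact HY|exact HZ].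
    apply PR_add; apply PR_sub; [exact HX|exact HK|exact HK|exact HX].
  - intros v _. destruct (X v =? K v) eqn:E.
    + apply Nat.eqb_eq in E. simpl. replace (X v - K v + (K v - X v)) with 0 by lia. reflexivity.
    + apply Nat.eqb_neq in E. simpl. destruct (X v - K v + (K v - X v) =? 0) eqn:E2; auto.
      apply Nat.eqb_eq in E2. lia.
Qed.

Lemma PR_pow2 m X : PR m X -> PR m (fun v => 2 ^ X v).
Proof.
  apply (PR_app1 (fun a => 2 ^ a)).
  apply (PR_rec 1 (fun k v => 2 ^ k) (fun _ => 1) (fun w => nth 1 w 0 + nth 1 w 0)).
  - apply PR_const.
  - apply PR_add; apply PR_proj; lia.
  - reflexivity.
  - intros; simpl; lia.
  - apply PR_proj; lia.
Qed.

Lemma odd_S_b2n k : Nat.b2n (Nat.odd (S k)) = 1 - Nat.b2n (Nat.odd k).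
Proof. rewrite Nat.odd_succ, <- Nat.negb_odd. destruct (Nat.odd k); reflexivity. Qed.

Lemma div2_S k : Nat.div2 (S k) = Nat.div2 k + Nat.b2n (Nat.odd k).
Proof.
  pose proof (Nat.div2_odd k). pose proof (Nat.div2_odd (S k)).
  rewrite odd_S_b2n in H0. destruct (Nat.odd k); simpl in *; lia.
Qed.

Lemma PR_odd m X : PR m X -> PR m (fun v => Nat.b2n (Nat.odd (X v))).
Proof.
  apply (PR_app1 (fun a => Nat.b2n (Nat.odd a))).
  apply (PR_rec 1 (fun k v => Nat.b2n (Nat.odd k)) (fun _ => 0) (fun w => 1 - nth 1 w 0)).
  - apply PR_const.
  - apply PR_sub; [apply PR_const|apply PR_proj; lia].
  - reflexivity.
  - intros; simpl nth. apply odd_S_b2n.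
  - apply PR_proj; lia.
Qed.

Lemma PR_div2 m X : PR m X -> PR m (fun v => Nat.div2 (X v)).
Proof.
  apply (PR_app1 Nat.div2).
  apply (PR_rec 1 (fun k v => Nat.div2 k) (fun _ => 0)
           (fun w => nth 1 w 0 + Nat.b2n (Nat.odd (nth 0 w 0)))).
  - apply PR_const.
  - apply PR_add; [apply PR_proj; lia|apply PR_odd, PR_proj; lia].
  - reflexivity.
  - intros; simpl nth. apply div2_S.
  - apply PR_proj; lia.
Qed.

Fixpoint dv (i a : nat) : nat := match i with 0 => a | S i => Nat.div2 (dv i a) end.

Lemma dv_div2 i a : dv i (Nat.div2 a) = Nat.div2 (dv i a).
Proof. induction i; simpl; congruence. Qed.

Lemma testbit_dv a i : Nat.testbit a i = Nat.odd (dv i a).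
Proof.
  revert a; induction i; intros a; simpl; auto. rewrite IHi, dv_div2. reflexivity.
Qed.

Lemma PR_tb m X Y : PR m X -> PR m Y -> PR m (fun v => Nat.b2n (Nat.testbit (X v) (Y v))).
Proof.
  apply (PR_app2 (fun a i => Nat.b2n (Nat.testbit a i))).
  eapply PR_ext.
  - apply PR_odd.
    apply (PR_rec 2 (fun k v => dv k (nth 0 v 0)) (fun v => nth 0 v 0) (fun w => Nat.div2 (nth 1 w 0))
             (fun v => nth 1 v 0)).
    + apply PR_proj; lia.
    + apply PR_div2, PR_proj; lia.
    + reflexivity.
    + reflexivity.
    + apply PR_proj; lia.
  - intros v _. simpl. rewrite testbit_dv. reflexivity.
Qed.

Fixpoint bsum (n : nat) (F : nat -> nat) : nat :=
  match n with 0 => 0 | S n => bsum n F + F n end.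

Lemma PR_bsum m F X : PR (S m) F -> PR m X -> PR m (fun v => bsum (X v) (fun i => F (i :: v))).
Proof.
  intros HF HX.
  apply (PR_rec m (fun k v => bsum k (fun i => F (i :: v))) (fun _ => 0)
           (fun w => nth 1 w 0 + F (nth 0 w 0 :: skipn 2 w))); auto.
  - apply PR_const.
  - apply PR_add; [apply PR_proj; lia|].
    eapply (PR_compl' _ _ F ((fun w => nth 0 w 0) :: map (fun i v => nth i v 0) (seq 2 m))); eauto.
    + constructor; [apply PR_proj; lia|apply Forall_projs; lia].
    + simpl. rewrite length_map, length_seq; auto.
    + intros v Hv. simpl. rewrite map_projs by lia. reflexivity.
Qed.

Lemma bsum_zero n F : bsum n F = 0 <-> forall i, i < n -> F i = 0.
Proof.
  induction n; simpl; split; intros H.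
  - intros; lia.
  - auto.
  - intros i Hi. assert (i < n \/ i = n) as [|] by lia; [apply IHn; lia|subst; lia].
  - assert (bsum n F = 0) by (apply IHn; auto). rewrite H0, H; auto.
Qed.

Definition allpos (rs : list nat) : bool := forallb (fun r => negb (r =? 0)) rs.

Definition mustep (r i : nat) : nat :=
  if r =? 0 then 0 else if r =? 1 then i + 2 else 1.

Fixpoint fe (c : prf) (s : nat) (v : list nat) {struct c} : nat :=
  match c with
  | PZero => 1
  | PSucc => match v with [] => 0 | x :: _ => S (S x) end
  | PProj i => if i <? length v then S (nth i v 0) else 0
  | PComp f gs =>
      let rs := map (fun g => fe g s v) gs in
      if allpos rs then fe f s (map pred rs) else 0
  | PPrec f g =>
      match v with
      | [] => 0
      | n :: v' => nat_rect (fun _ => nat) (fe f s v')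
                     (fun k y => if y =? 0 then 0 else fe g s (k :: pred y :: v')) n
      end
  | PMu f =>
      pred (nat_rect (fun _ => nat) 1
              (fun i st => if st =? 1 then mustep (fe f s (i :: v)) i else st) s)
  end.

Definition mst (f : prf) (s : nat) (v : list nat) (n : nat) : nat :=
  nat_rect (fun _ => nat) 1 (fun i st => if st =? 1 then mustep (fe f s (i :: v)) i else st) n.

Lemma fe_mu f s v : fe (PMu f) s v = pred (mst f s v s).
Proof. reflexivity. Qed.

Lemma mst_S f s v n : mst f s v (S n) = if mst f s v n =? 1 then mustep (fe f s (n :: v)) n else mst f s v n.
Proof. reflexivity. Qed.

Lemma mst_stay f s v n j : mst f s v n <> 1 -> mst f s v (n + j) = mst f s v n.
Proof.
  intros H. induction j. - rewrite Nat.add_0_r; auto.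
  - rewrite Nat.add_succ_r, mst_S, IHj. destruct (mst f s v n =? 1) eqn:E; auto.
    apply Nat.eqb_eq in E; lia.
Qed.

Lemma allpos_map_mono (gs : list prf) s s' v :
  Forall (fun g => forall s s' v y, fe g s v = S y -> s <= s' -> fe g s' v = S y) gs ->
  s <= s' -> allpos (map (fun g => fe g s v) gs) = true ->
  map (fun g => fe g s' v) gs = map (fun g => fe g s v) gs.
Proof.
  induction 1 as [|g gs Hg _ IH]; intros Hs Ha; simpl in *; auto.
  apply andb_prop in Ha as [H1 H2]. destruct (fe g s v) eqn:E; [discriminate|].
  f_equal; auto. eapply Hg; eauto.
Qed.

Lemma fe_mono : forall c s s' v y, fe c s v = S y -> s <= s' -> fe c s' v = S y.
Proof.
  induction c as [| |i|f gs IHf IHgs|f g IHf IHg|f IHf] using prf_ind';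
    intros s s' v y H Hs; simpl in *; auto.
  - destruct (allpos (map (fun g => fe g s v) gs)) eqn:E; [|discriminate].
    rewrite (allpos_map_mono gs s s' v IHgs Hs E), E. eauto.
  - destruct v as [|n v']; auto.
    revert y H. induction n as [|n IHn]; simpl; intros y H; eauto.
    destruct (nat_rect _ (fe f s v') _ n) as [|y0] eqn:E; simpl in H; [discriminate|].
    rewrite (IHn y0 eq_refl). simpl. eauto.
  - change (pred (mst f s v s) = S y) in H. change (pred (mst f s' v s') = S y).
    assert (Hst : forall i, mst f s v i <> 0 -> mst f s' v i = mst f s v i).
    { induction i as [|i IH]; intros Hi; auto.
      rewrite (mst_S f s' v i), (mst_S f s v i) in *.
      destruct (Nat.eqb_spec (mst f s v i) 1) as [E1|E1].
      - rewrite IH by lia. rewrite E1. simpl.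
        unfold mustep in *. destruct (fe f s (i :: v)) as [|[|r]] eqn:E2; simpl in Hi.
        + lia.
        + rewrite (IHf _ _ _ _ E2 Hs). reflexivity.
        + rewrite (IHf _ _ _ _ E2 Hs). reflexivity.
      - rewrite IH by auto. destruct (Nat.eqb_spec (mst f s v i) 1); [lia|auto]. }
    assert (mst f s v s = S (S y)) as E by lia.
    rewrite <- (Hst s) in E by lia.
    pose proof (mst_stay f s' v s (s' - s)) as M. replace (s + (s' - s)) with s' in M by lia.
    rewrite M, E; auto. rewrite E; lia.
Qed.

Lemma fe_sound : forall c s v y, fe c s v = S y -> eval c v y.
Proof.
  induction c as [| |i|f gs IHf IHgs|f g IHf IHg|f IHf] using prf_ind';
    intros s v y H.
  - simpl in H. injection H as <-. constructor.
  - simpl in H. destruct v as [|x v]; [discriminate|]. injection H as <-. constructor.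
  - simpl in H. destruct (i <? length v) eqn:E; [|discriminate].
    injection H as <-. apply Nat.ltb_lt in E. constructor; auto.
  - simpl in H. destruct (allpos (map (fun g => fe g s v) gs)) eqn:E; [|discriminate].
    econstructor; [|eapply IHf; eauto].
    clear H IHf. induction IHgs as [|g gs Hg _ IH]; simpl in *; constructor.
    + apply andb_prop in E as [E _]. destruct (fe g s v) eqn:E'; [discriminate|].
      simpl. eapply Hg; eauto.
    + apply andb_prop in E as [_ E]. auto.
  - simpl in H. destruct v as [|n v]; [discriminate|].
    revert y H. induction n as [|n IHn]; simpl; intros y H.
    + constructor. eauto.
    + destruct (nat_rect _ (fe f s v) _ n) as [|y0] eqn:E; simpl in H; [discriminate|].
      econstructor; [apply IHn; reflexivity|]. simpl in H. eauto.
  - change (pred (mst f s v s) = S y) in H.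
    assert (Inv : forall i, (mst f s v i = 1 -> forall z, z < i -> exists k, eval f (z :: v) (S k)) /\
                       (forall y, mst f s v i = S (S y) -> eval (PMu f) v y)).
    { induction i as [|i [IH1 IH2]].
      - split; [intros; lia|intros y0 E; simpl in E; discriminate].
      - rewrite mst_S. destruct (Nat.eqb_spec (mst f s v i) 1) as [E1|E1].
        + unfold mustep. destruct (fe f s (i :: v)) as [|[|r]] eqn:E2; simpl.
          * split; intros; discriminate.
          * split; [intros; lia|]. intros y0 E. assert (y0 = i) by lia. subst.
            constructor; [eapply IHf; eauto|]. apply IH1; auto.
          * split; [|intros; discriminate]. intros _ z Hz.
            assert (z < i \/ z = i) as [|] by lia; [apply IH1; auto|subst].
            exists r. eapply IHf; eauto.
        + split; [intros; lia|]. auto. }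
    apply (proj2 (Inv s)). lia.
Qed.

Lemma fe_complete : forall c v y, eval c v y -> exists s, fe c s v = S y.
Proof.
  induction c as [| |i|f gs IHf IHgs|f g IHf IHg|f IHf] using prf_ind';
    intros v y H.
  - inversion H; subst. exists 0. reflexivity.
  - inversion H; subst. exists 0. reflexivity.
  - inversion H as [| |? ? Hl| | | | ]; subst. exists 0. simpl. apply Nat.ltb_lt in Hl. rewrite Hl. reflexivity.
  - inversion H as [| | |? ? ? ws ? E1 F1| | | ]; subst.
    destruct (IHf _ _ F1) as [s1 Hs1].
    assert (exists s0, forall s, s0 <= s -> map (fun g => fe g s v) gs = map S ws) as [s0 Hs0].
    { clear - IHgs E1. revert ws E1. induction IHgs as [|g gs Hg _ IH]; intros ws E1.
      - inversion E1; subst. exists 0. reflexivity.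
      - inversion E1 as [|? ? ? w ws' Ew Ews]; subst. destruct (Hg _ _ Ew) as [sa Ha]. destruct (IH _ Ews) as [sb Hb].
        exists (max sa sb). intros s Hs. simpl. rewrite Hb by lia.
        rewrite (fe_mono _ _ _ _ _ Ha) by lia. reflexivity. }
    exists (max s0 s1). simpl. rewrite Hs0 by lia.
    assert (allpos (map S ws) = true) as -> by (clear; induction ws; simpl; auto).
    rewrite map_map. simpl. rewrite map_id. eapply fe_mono; eauto; lia.
  - destruct v as [|n v]; [inversion H|].
    revert y H. induction n as [|n IHn]; intros y H.
    + inversion H; subst.
      match goal with A : eval f v y |- _ => destruct (IHf _ _ A) as [s Hs] end. exists s. simpl. auto.
    + inversion H; subst.
      match goal with A : eval (PPrec f g) (n :: v) ?y0, B : eval g _ _ |- _ =>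
        destruct (IHn _ A) as [s1 Hs1]; destruct (IHg _ _ B) as [s2 Hs2] end.
      exists (max s1 s2).
      pose proof (fe_mono _ _ (max s1 s2) _ _ Hs1 ltac:(lia)) as M. simpl in M |- *.
      rewrite M. simpl. eapply fe_mono; eauto; lia.
  - inversion H as [| | | | | |? ? ? H1 H2]; subst.
    destruct (IHf _ _ H1) as [s0 Hs0].
    assert (exists s1, forall s, s1 <= s -> forall z, z < y -> exists k, fe f s (z :: v) = S (S k))
      as [s1 Hs1].
    { clear H H1 Hs0. induction y as [|y IHy].
      - exists 0. intros; lia.
      - destruct IHy as [sa Ha]. { intros z Hz. apply H2. lia. }
        destruct (H2 y ltac:(lia)) as [k Hk]. destruct (IHf _ _ Hk) as [sb Hb].
        exists (max sa sb). intros s Hs z Hz.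
        assert (z < y \/ z = y) as [|] by lia; [apply Ha; auto; lia|subst].
        exists k. eapply fe_mono; eauto; lia. }
    exists (max (S y) (max s0 s1)). set (s := max (S y) (max s0 s1)).
    change (pred (mst f s v s) = S y).
    assert (forall i, i <= y -> mst f s v i = 1).
    { induction i; intros Hi; auto. rewrite mst_S, IHi by lia. simpl.
      destruct (Hs1 s ltac:(lia) i ltac:(lia)) as [k Hk]. rewrite Hk. reflexivity. }
    assert (mst f s v (S y) = S (S y)).
    { rewrite mst_S, H0 by lia. simpl. rewrite (fe_mono _ _ s _ _ Hs0) by lia. unfold mustep; simpl; lia. }
    pose proof (mst_stay f s v (S y) (s - S y)) as M. replace (S y + (s - S y)) with s in M by lia.
    rewrite M; rewrite H3; auto.
Qed.

Definition sg (x : nat) : nat := if x =? 0 then 0 else 1.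

Lemma allpos_prod rs X : (if allpos rs then X else 0) = fold_right Nat.mul 1 (map sg rs) * X.
Proof.
  unfold allpos. induction rs as [|r rs IH]; simpl; [lia|].
  unfold sg at 1; destruct r; simpl; [lia|]. rewrite Nat.add_0_r, <- IH. reflexivity.
Qed.

Lemma PR_fe : forall c m, PR (S m) (fun w => fe c (hd 0 w) (tl w)).
Proof.
  induction c as [| |i|f gs IHf IHgs|f g IHf IHg|f IHf] using prf_ind'; intros m.
  - apply (PR_const _ 1).
  - destruct m as [|m].
    + eapply PR_ext; [apply (PR_const _ 0)|].
      intros [|s [|x v]] Hv; simpl in *; auto; lia.
    + eapply PR_ext; [apply PR_S, PR_S, (PR_proj _ 1); lia|].
      intros [|s [|x v]] Hv; simpl in *; auto; lia.
  - destruct (lt_dec i m) as [Hi|Hi].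
    + eapply PR_ext; [apply PR_S, (PR_proj _ (S i)); lia|].
      intros [|s v] Hv; simpl in *; [lia|].
      assert (i <? length v = true) as -> by (apply Nat.ltb_lt; lia). reflexivity.
    + eapply PR_ext; [apply (PR_const _ 0)|].
      intros [|s v] Hv; simpl in *; [lia|].
      assert (i <? length v = false) as -> by (apply Nat.ltb_ge; lia). reflexivity.
  - assert (Hp : PR (S m) (fun w => fold_right Nat.mul 1 (map (fun g => sg (fe g (hd 0 w) (tl w))) gs))).
    { clear IHf. induction IHgs as [|g gs Hg _ IH]; simpl.
      - apply PR_const.
      - apply PR_mul; auto. unfold sg. apply PR_cond; [apply Hg|apply PR_const|apply PR_const]. }
    assert (Hv : PR (S m) (fun w => fe f (hd 0 w)
                   (map (fun g => pred (fe g (hd 0 w) (tl w))) gs))).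
    { eapply (PR_compl' _ _ _ ((fun w => hd 0 w) :: map (fun g w => pred (fe g (hd 0 w) (tl w))) gs)).
      - apply (IHf (length gs)).
      - constructor.
        + eapply PR_ext; [apply (PR_proj _ 0); lia|]. intros [|] ?; reflexivity.
        + clear IHf Hp. induction IHgs; simpl; constructor; auto. apply PR_pred; auto.
      - simpl. rewrite length_map. reflexivity.
      - intros w _. simpl. rewrite map_map. reflexivity. }
    eapply PR_ext; [apply (PR_mul _ _ _ Hp Hv)|].
    intros w _. simpl. rewrite allpos_prod, !map_map. reflexivity.
  - destruct m as [|m].
    + eapply PR_ext; [apply (PR_const _ 0)|]. intros [|s [|n v]] Hv; simpl in *; auto; lia.
    + set (h := fun k w => nat_rect (fun _ => nat) (fe f (hd 0 w) (skipn 2 w))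
                   (fun k y => if y =? 0 then 0 else fe g (hd 0 w) (k :: pred y :: skipn 2 w)) k).
      assert (HF : PR (S (S m)) (fun w => fe f (hd 0 w) (skipn 2 w))).
      { eapply (PR_compl' _ _ _ ((fun w => nth 0 w 0) :: map (fun i v => nth i v 0) (seq 2 m))).
        - apply (IHf m).
        - constructor; [apply PR_proj; lia|apply Forall_projs; lia].
        - simpl. rewrite length_map, length_seq; auto.
        - intros w Hw. simpl. rewrite map_projs by lia. destruct w; reflexivity. }
      assert (HG : PR (S (S (S (S m)))) (fun u => if nth 1 u 0 =? 0 then 0 else
                      fe g (nth 2 u 0) (nth 0 u 0 :: pred (nth 1 u 0) :: skipn 4 u))).
      { apply PR_cond; [apply PR_proj; lia|apply PR_const|].
        eapply (PR_compl' _ _ _ ([(fun u => nth 2 u 0); (fun u => nth 0 u 0); (fun u => pred (nth 1 u 0))]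
                                  ++ map (fun i v => nth i v 0) (seq 4 m))).
        - apply (IHg (S (S m))).
        - apply Forall_app; split; [|apply Forall_projs; lia].
          repeat constructor; try (apply PR_proj; lia). apply PR_pred, PR_proj; lia.
        - rewrite length_app, length_map, length_seq. reflexivity.
        - intros u Hu. rewrite map_app, map_projs by lia. reflexivity. }
      eapply PR_ext; [apply (PR_rec _ h _ _ (fun w => nth 1 w 0) HF HG)|].
      * reflexivity.
      * intros k w Hw. destruct w as [|s w]; simpl in Hw; [lia|]. reflexivity.
      * apply PR_proj; lia.
      * intros [|s [|n v]] Hv; simpl in *; try lia. reflexivity.
  - assert (HG : PR (S (S (S m))) (fun u => if nth 1 u 0 =? 1 then
                    mustep (fe f (nth 2 u 0) (nth 0 u 0 :: skipn 3 u)) (nth 0 u 0) else nth 1 u 0)).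
    { apply PR_condeq; [apply PR_proj; lia|apply PR_const| |apply PR_proj; lia].
      unfold mustep.
      assert (HR : PR (S (S (S m))) (fun u => fe f (nth 2 u 0) (nth 0 u 0 :: skipn 3 u))).
      { eapply (PR_compl' _ _ _ ([(fun u => nth 2 u 0); (fun u => nth 0 u 0)]
                                  ++ map (fun i v => nth i v 0) (seq 3 m))).
        - apply (IHf (S m)).
        - apply Forall_app; split; [|apply Forall_projs; lia].
          repeat constructor; apply PR_proj; lia.
        - rewrite length_app, length_map, length_seq. reflexivity.
        - intros u Hu. rewrite map_app, map_projs by lia. reflexivity. }
      apply PR_cond; [exact HR|apply PR_const|].
      apply PR_condeq; [exact HR|apply PR_const| |apply PR_const].
      apply PR_add; [apply PR_proj; lia|apply PR_const]. }
    eapply PR_ext; [apply PR_pred, (PR_rec _ (fun i w => mst f (hd 0 w) (tl w) i) (fun _ => 1) _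
                                        (fun w => nth 0 w 0) (PR_const _ 1) HG)|].
    * reflexivity.
    * intros k w Hw. destruct w as [|s w]; simpl in Hw; [lia|]. reflexivity.
    * apply PR_proj; lia.
    * intros [|s v] Hv; simpl in *; try lia. reflexivity.
Qed.

Definition ceN (m : nat) (R : list nat -> Prop) : Prop :=
  exists c, forall v, length v = m -> (R v <-> exists y, eval c v y).

Lemma ceN_ext m R R' : ceN m R -> (forall v, length v = m -> (R v <-> R' v)) -> ceN m R'.
Proof.
  intros [c Hc] E. exists c. intros v Hv. rewrite <- E by auto. auto.
Qed.

Lemma PR_eval m F c v : (forall v, length v = m -> eval c v (F v)) -> length v = m ->
  forall y, eval c v y -> y = F v.
Proof. intros Hc Hv y Hy. eapply eval_det; eauto. Qed.

Lemma least_zero (f : nat -> nat) s : f s = 0 ->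
  exists s', f s' = 0 /\ forall z, z < s' -> f z <> 0.
Proof.
  revert s. induction s as [s IH] using lt_wf_ind. intros Hs.
  destruct (classic (exists z, z < s /\ f z = 0)) as [[z [Hz1 Hz2]]|Hn].
  - eauto.
  - exists s. split; auto. intros z Hz E. apply Hn; eauto.
Qed.

Lemma bsum_pos n F : bsum n F <> 0 -> exists i, i < n /\ F i <> 0.
Proof.
  intros H. destruct (classic (exists i, i < n /\ F i <> 0)) as [|Hn]; auto.
  exfalso. apply H. apply bsum_zero. intros i Hi.
  destruct (Nat.eq_dec (F i) 0); auto. exfalso; eauto.
Qed.

Lemma bsum_ge n F i : i < n -> F i <= bsum n F.
Proof.
  induction n; simpl; intros Hi; [lia|].
  assert (i < n \/ i = n) as [|] by lia; [specialize (IHn H); lia|subst; lia].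
Qed.

Lemma ceN_proj m R : ceN (S m) R -> ceN m (fun v => exists k, R (k :: v)).
Proof.
  intros [c Hc].
  set (T := fun w : list nat => if bsum (S (hd 0 w)) (fun k => fe c (hd 0 w) (k :: tl w)) =? 0 then 1 else 0).
  assert (HT : PR (S m) T).
  { unfold T. apply PR_cond; [|apply PR_const|apply PR_const].
    eapply PR_ext.
    - apply (PR_bsum _ (fun u => fe c (nth 1 u 0) (nth 0 u 0 :: skipn 2 u))).
      + eapply (PR_compl' _ _ _ ([(fun u => nth 1 u 0); (fun u => nth 0 u 0)]
                                  ++ map (fun i v => nth i v 0) (seq 2 m))).
        * apply (PR_fe c (S m)).
        * apply Forall_app; split; [|apply Forall_projs; lia].
          repeat constructor; apply PR_proj; lia.
        * rewrite length_app, length_map, length_seq. reflexivity.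
        * intros u Hu. rewrite map_app, map_projs by lia. reflexivity.
      + apply PR_S, (PR_proj _ 0); lia.
    - intros [|s v] Hv; simpl in *; [lia|]. reflexivity. }
  destruct HT as [ct Hct].
  exists (PMu ct). intros v Hv. split.
  - intros [k Hk]. apply Hc in Hk as [y Hy]; [|simpl; lia].
    apply fe_complete in Hy as [s0 Hs0].
    set (s := max s0 k).
    assert (Ts : T (s :: v) = 0).
    { unfold T. simpl hd; simpl tl.
      assert (fe c s (k :: v) = S y) by (eapply fe_mono; eauto; lia).
      pose proof (bsum_ge (S s) (fun k0 => fe c s (k0 :: v)) k ltac:(lia)). simpl in H0.
      destruct (_ =? 0) eqn:E; auto. apply Nat.eqb_eq in E. simpl in E. lia. }
    destruct (least_zero (fun s => T (s :: v)) s Ts) as [s' [H1 H2]].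
    exists s'. constructor.
    + rewrite <- H1. apply Hct. simpl; lia.
    + intros z Hz. specialize (H2 z Hz). destruct (T (z :: v)) as [|k0] eqn:E; [lia|].
      exists k0. rewrite <- E. apply Hct. simpl; lia.
  - intros [y Hy]. inversion Hy as [| | | | | |? ? ? H1 H2]; subst.
    apply (PR_eval _ _ _ _ Hct) in H1; [|simpl; lia].
    unfold T in H1. simpl hd in H1; simpl tl in H1.
    destruct (_ =? 0) eqn:E in H1; [discriminate|]. apply Nat.eqb_neq in E.
    apply bsum_pos in E as [k [Hk1 Hk2]].
    destruct (fe c y (k :: v)) as [|r] eqn:Ef; [lia|].
    exists k. apply Hc; [simpl; lia|]. exists r. eapply fe_sound; eauto.
Qed.

Lemma ceN_guard m R G1 G2 P : ceN 2 R -> PR m G1 -> PR m G2 -> PR m P ->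
  ceN m (fun v => P v = 0 /\ R [G1 v; G2 v]).
Proof.
  intros [c Hc] [c1 H1] [c2 H2] HP.
  assert (HP' : PR (S m) (fun w => P (tl w))).
  { eapply (PR_compl' _ _ _ (map (fun i v => nth i v 0) (seq 1 m))); eauto.
    - apply Forall_projs; lia.
    - rewrite length_map, length_seq; auto.
    - intros w Hw. rewrite map_projs by lia. destruct w; reflexivity. }
  destruct HP' as [cp Hcp].
  exists (PComp (PComp c [PProj 0; PProj 1]) [c1; c2; PMu cp]).
  intros v Hv. split.
  - intros [E HR']. apply Hc in HR' as [y Hy]; [|reflexivity].
    exists y. econstructor.
    + constructor; [apply H1; auto|]. constructor; [apply H2; auto|].
      constructor; [|constructor]. constructor.
      * rewrite <- E. apply (Hcp (0 :: v)). simpl; lia.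
      * intros; lia.
    + econstructor; [|exact Hy].
      constructor; [constructor; simpl; lia|]. constructor; [constructor; simpl; lia|]. constructor.
  - intros [y Hy].
    inversion Hy as [| | |? ? ? ws ? E1 F1| | | ]; subst.
    inversion E1 as [|? ? ? w1 ws1 Ew1 Ews1]; subst.
    inversion Ews1 as [|? ? ? w2 ws2 Ew2 Ews2]; subst.
    inversion Ews2 as [|? ? ? w3 ws3 Ew3 Ews3]; subst.
    inversion Ews3; subst.
    apply (PR_eval _ _ _ _ H1 eq_refl) in Ew1. apply (PR_eval _ _ _ _ H2 eq_refl) in Ew2. subst.
    inversion Ew3 as [| | | | | |? ? ? Hz _]; subst.
    apply (PR_eval _ _ _ _ Hcp) in Hz; [|simpl; lia]. simpl in Hz.
    split; [auto|].
    inversion F1 as [| | |? ? ? ws' ? E2 F2| | | ]; subst.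
    inversion E2 as [|? ? ? u1 us1 Eu1 Eus1]; subst.
    inversion Eus1 as [|? ? ? u2 us2 Eu2 Eus2]; subst.
    inversion Eus2; subst.
    inversion Eu1; subst. inversion Eu2; subst. simpl in F2.
    apply Hc; [reflexivity|]. eauto.
Qed.

Lemma ce2_ceN R : ce2 R -> ceN 2 (fun v => R (nth 0 v 0) (nth 1 v 0)).
Proof.
  intros [c Hc]. exists c. intros [|a [|b [|]]] Hv; simpl in Hv; try lia. apply Hc.
Qed.

Lemma ceN_ce2 R : ceN 2 (fun v => R (nth 0 v 0) (nth 1 v 0)) -> ce2 R.
Proof.
  intros [c Hc]. exists c. intros a b. apply (Hc [a; b]). reflexivity.
Qed.

Lemma ce_main (Q R : nat -> nat -> Prop) (P : list nat -> nat) :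
  ce2 R -> PR 4 P ->
  (forall a b, Q a b <-> exists k2 k1, P [k1; k2; a; b] = 0 /\ R k1 k2) -> ce2 Q.
Proof.
  intros HR HP E. apply ceN_ce2.
  pose proof (ceN_guard 4 _ (fun v => nth 0 v 0) (fun v => nth 1 v 0) P (ce2_ceN R HR)
                (PR_proj 4 0 ltac:(lia)) (PR_proj 4 1 ltac:(lia)) HP) as G.
  apply ceN_proj, ceN_proj in G.
  eapply ceN_ext; [exact G|].
  intros [|a [|b [|]]] Hv; simpl in Hv; try lia. simpl. rewrite E. reflexivity.
Qed.

Definition tb (a i : nat) : nat := Nat.b2n (Nat.testbit a i).
Definition lei (a b : nat) : nat := if a - b =? 0 then 1 else 0.
Definition absd (a b : nat) : nat := (a - b) + (b - a).

Lemma lt_log2 i n : i < Nat.log2 n <-> 2 ^ S i <= n.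
Proof.
  destruct n as [|n].
  - change (Nat.log2 0) with 0. split; [lia|]. intros H. pose proof (Nat.pow_nonzero 2 (S i) ltac:(lia)). lia.
  - rewrite Nat.log2_le_pow2 by lia. lia.
Qed.

Lemma tb_bound e i : Nat.testbit e i = true -> i < e.
Proof.
  intros H. destruct (lt_dec i e) as [|Hn]; auto.
  destruct e as [|e]; [rewrite Nat.bits_0 in H; discriminate|].
  rewrite Nat.bits_above_log2 in H; [discriminate|].
  pose proof (Nat.log2_lt_lin (S e)). lia.
Qed.

Lemma lei_spec a b : lei a b = 1 <-> a <= b.
Proof. unfold lei. destruct (a - b =? 0) eqn:E; [apply Nat.eqb_eq in E|apply Nat.eqb_neq in E]; split; intros; lia. Qed.

Lemma lei_01 a b : lei a b = 0 \/ lei a b = 1.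
Proof. unfold lei. destruct (_ =? 0); auto. Qed.

Lemma tb_true a i : tb a i = 1 <-> Nat.testbit a i = true.
Proof. unfold tb. destruct (Nat.testbit a i); simpl; split; congruence. Qed.

Lemma tb_01 a i : tb a i = 0 \/ tb a i = 1.
Proof. unfold tb. destruct (Nat.testbit a i); auto. Qed.

Definition Pth (v : list nat) : nat :=
  let e := nth 0 v 0 in let f := nth 1 v 0 in let n := nth 2 v 0 in let x := nth 3 v 0 in
  bsum e (fun i => tb e i * (1 - tb n i * lei (2 ^ S i) n)) + (1 - tb f x).

Definition Pps (v : list nat) : nat :=
  let n := nth 0 v 0 in let x := nth 1 v 0 in let e := nth 2 v 0 in let f := nth 3 v 0 in
  bsum (e + n) (fun i => absd (tb e i) (tb n i * lei (2 ^ S i) n))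
  + (if n =? 0 then 1 else 0) + absd f (2 ^ x).

Lemma PR_lei m X Y : PR m X -> PR m Y -> PR m (fun v => lei (X v) (Y v)).
Proof. intros; unfold lei; apply PR_cond; [apply PR_sub; auto|apply PR_const|apply PR_const]. Qed.

Lemma PR_absd m X Y : PR m X -> PR m Y -> PR m (fun v => absd (X v) (Y v)).
Proof. intros; unfold absd; apply PR_add; apply PR_sub; auto. Qed.

Lemma PR_tb' m X Y : PR m X -> PR m Y -> PR m (fun v => tb (X v) (Y v)).
Proof. apply PR_tb. Qed.

Ltac prs := repeat first
  [ apply PR_add | apply PR_mul | apply PR_sub | apply PR_tb' | apply PR_lei | apply PR_absd
  | apply PR_pow2 | apply PR_S | apply (PR_proj _ _); lia | apply PR_const ].

Lemma PR_Pth : PR 4 Pth.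
Proof.
  unfold Pth. apply PR_add.
  - apply (PR_bsum 4 (fun u => tb (nth 1 u 0) (nth 0 u 0) *
                               (1 - tb (nth 3 u 0) (nth 0 u 0) * lei (2 ^ S (nth 0 u 0)) (nth 3 u 0)))).
    + apply PR_mul; [apply PR_tb'; apply PR_proj; lia|].
      apply PR_sub; [apply PR_const|]. apply PR_mul; [apply PR_tb'; apply PR_proj; lia|].
      apply PR_lei; [apply PR_pow2, PR_S, PR_proj; lia|apply PR_proj; lia].
    + apply PR_proj; lia.
  - apply PR_sub; [apply PR_const|]. apply PR_tb'; apply PR_proj; lia.
Qed.

Lemma PR_Pps : PR 4 Pps.
Proof.
  unfold Pps. apply PR_add; [apply PR_add|].
  - apply (PR_bsum 4 (fun u => absd (tb (nth 3 u 0) (nth 0 u 0))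
                               (tb (nth 1 u 0) (nth 0 u 0) * lei (2 ^ S (nth 0 u 0)) (nth 1 u 0)))).
    + apply PR_absd; [apply PR_tb'; apply PR_proj; lia|].
      apply PR_mul; [apply PR_tb'; apply PR_proj; lia|].
      apply PR_lei; [apply PR_pow2, PR_S, PR_proj; lia|apply PR_proj; lia].
    + apply PR_add; apply PR_proj; lia.
  - apply PR_cond; [apply PR_proj; lia|apply PR_const|apply PR_const].
  - apply PR_absd; [apply PR_proj; lia|apply PR_pow2, PR_proj; lia].
Qed.

Lemma Pth_spec e f n x : Pth [e; f; n; x] = 0 <->
  (forall i, Nat.testbit e i = true -> i < Nat.log2 n /\ Nat.testbit n i = true) /\ Nat.testbit f x = true.
Proof.
  unfold Pth; simpl nth. rewrite Nat.eq_add_0, bsum_zero. split.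
  - intros [H1 H2]. split.
    + intros i Hi. specialize (H1 i (tb_bound _ _ Hi)). apply tb_true in Hi. rewrite Hi in H1.
      destruct (tb_01 n i) as [E|E]; rewrite E in H1; [simpl in H1; lia|].
      destruct (lei_01 (2 ^ S i) n) as [E'|E']; rewrite E' in H1; [simpl in H1; lia|].
      apply lei_spec, lt_log2 in E'. apply tb_true in E. auto.
    + destruct (tb_01 f x) as [E|E]; [rewrite E in H2; simpl in H2; lia|]. apply tb_true; auto.
  - intros [H1 H2]. split.
    + intros i _. destruct (tb_01 e i) as [E|E]; rewrite E; [lia|].
      apply tb_true in E. destruct (H1 i E) as [A B].
      apply lt_log2, lei_spec in A. apply tb_true in B. rewrite A, B. lia.
    + apply tb_true in H2. rewrite H2. lia.
Qed.

Lemma Pps_spec n x e f : Pps [n; x; e; f] = 0 <->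
  (forall i, Nat.testbit e i = true <-> (i < Nat.log2 n /\ Nat.testbit n i = true)) /\ 0 < n /\ f = 2 ^ x.
Proof.
  unfold Pps; simpl nth. rewrite !Nat.eq_add_0, bsum_zero. unfold absd at 2. split.
  - intros [[H1 H2] H3]. destruct (Nat.eqb_spec n 0); [discriminate|]. split; [|split; lia].
    intros i. split.
    + intros Hi. assert (i < e + n) by (pose proof (tb_bound _ _ Hi); lia).
      specialize (H1 i H). apply tb_true in Hi. rewrite Hi in H1. unfold absd in H1.
      destruct (tb_01 n i) as [E|E]; rewrite E in H1; [simpl in H1; lia|].
      destruct (lei_01 (2 ^ S i) n) as [E'|E']; rewrite E' in H1; [simpl in H1; lia|].
      apply lei_spec, lt_log2 in E'. apply tb_true in E. auto.
    + intros [A B]. assert (i < e + n) by (pose proof (tb_bound _ _ B); lia).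
      specialize (H1 i H). apply lt_log2, lei_spec in A. apply tb_true in B. rewrite A, B in H1.
      unfold absd in H1. apply tb_true. lia.
  - intros [H1 [H2 H3]]. split; [split|].
    + intros i _. unfold absd.
      destruct (tb_01 e i) as [E|E].
      * destruct (tb_01 n i) as [E2|E2]; rewrite E, E2; [simpl; lia|].
        destruct (lei_01 (2 ^ S i) n) as [E3|E3]; rewrite E3; [lia|].
        exfalso. apply lei_spec, lt_log2 in E3. apply tb_true in E2.
        assert (Nat.testbit e i = true) by (apply H1; auto). apply tb_true in H. lia.
      * apply tb_true in E. destruct (proj1 (H1 i) E) as [A B].
        apply lt_log2, lei_spec in A. apply tb_true in B. apply tb_true in E.
        rewrite A, B, E. lia.
    + destruct (Nat.eqb_spec n 0); lia.
    + subst. lia.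
Qed.

Lemma code_exists (C : nat -> Prop) L : exists r,
  (forall i, i < L -> (Nat.testbit r i = true <-> C i)) /\ (forall i, L <= i -> Nat.testbit r i = false).
Proof.
  induction L as [|L [r [H1 H2]]].
  - exists 0. split; [intros; lia|intros; apply Nat.bits_0].
  - destruct (classic (C L)) as [HC|HC].
    + exists (Nat.setbit r L). split.
      * intros i Hi. destruct (Nat.eq_dec i L) as [->|Hne].
        -- rewrite Nat.setbit_eq. tauto.
        -- rewrite Nat.setbit_neq by auto. apply H1. lia.
      * intros i Hi. rewrite Nat.setbit_neq by lia. apply H2. lia.
    + exists r. split.
      * intros i Hi. destruct (Nat.eq_dec i L) as [->|Hne].
        -- rewrite H2 by lia. split; [discriminate|tauto].
        -- apply H1. lia.
      * intros i Hi. apply H2. lia.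
Qed.

Theorem proposition2p1 (A B : nat -> Prop) (hA : infinite A) (hB : infinite B) :
  (exists Psi : nat -> nat -> Prop, ce2 Psi /\
     forall C : nat -> Prop, infinite C -> (forall x, C x -> B x) ->
       forall x, enum_apply Psi C x <-> A x)
  <->
  (exists Theta : nat -> nat -> Prop, ce2 Theta /\
     forall C : nat -> Prop, infinite C -> (forall x, C x -> B x) ->
       forall x, rel_apply Theta C x <-> A x).
Proof.
  split.
  - intros [Psi [HPc HPsi]].
    exists (fun n x => exists f e, Pth [e; f; n; x] = 0 /\ Psi e f). split.
    + eapply ce_main; [exact HPc|exact PR_Pth|]. intros; reflexivity.
    + intros C HC HCB x. rewrite <- (HPsi C HC HCB x). split.
      * intros [n [[f [e [HP HPs]]] [Hn Hseg]]]. apply Pth_spec in HP as [H1 H2].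
        exists e, f. split; [auto|split; [|exact H2]].
        intros i Hi. destruct (H1 i Hi) as [A1 A2]. apply Hseg; auto.
      * intros [e [f [HPs [HE Hf]]]].
        destruct (code_exists C e) as [r [R1 R2]].
        set (n := Nat.setbit r e).
        assert (Hl : Nat.log2 n = e).
        { apply Nat.log2_bits_unique; [apply Nat.setbit_eq|].
          intros m0 Hm. unfold n. rewrite Nat.setbit_neq by lia. apply R2. lia. }
        exists n. split.
        -- exists f, e. split; [|auto]. apply Pth_spec. split; [|exact Hf].
           intros i Hi. pose proof (tb_bound _ _ Hi). rewrite Hl. split; [auto|].
           unfold n. rewrite Nat.setbit_neq by lia. apply R1; auto.
        -- split.
           ++ destruct n eqn:En; [|lia]. exfalso.
              pose proof (Nat.setbit_eq r e). fold n in H. rewrite En, Nat.bits_0 in H. discriminate.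
           ++ intros i Hi. rewrite Hl in Hi. unfold n. rewrite Nat.setbit_neq by lia. apply R1; auto.
  - intros [Th [HTc HTh]].
    exists (fun e f => exists x n, Pps [n; x; e; f] = 0 /\ Th n x). split.
    + eapply ce_main; [exact HTc|exact PR_Pps|]. intros; reflexivity.
    + intros C HC HCB x. split.
      * intros [e [f [[x' [n [HP HT]]] [HE Hf]]]].
        apply Pps_spec in HP as [H1 [H2 H3]]. subst f.
        unfold canon in Hf. rewrite Nat.pow2_bits_eqb in Hf. apply Nat.eqb_eq in Hf. subst x'.
        set (C' := fun i => (i < Nat.log2 n /\ Nat.testbit n i = true) \/ (Nat.log2 n <= i /\ B i)).
        assert (HC'B : forall i, C' i -> B i).
        { intros i [Hi|[_ Hi]]; auto. apply HCB, HE. unfold canon. apply H1; auto. }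
        assert (HC'i : infinite C').
        { intros k. destruct (hB (max k (Nat.log2 n))) as [m0 [Hm1 Hm2]].
          exists m0. split; [lia|]. right. split; [lia|auto]. }
        apply (HTh C' HC'i HC'B x). exists n. split; [auto|]. split; [auto|].
        intros i Hi. split; [intros; left; auto|]. intros [[_ ?]|[? _]]; auto; lia.
      * intros Hx. apply (HTh C HC HCB x) in Hx as [n [HT [Hn Hseg]]].
        exists (Nat.clearbit n (Nat.log2 n)), (2 ^ x). split; [|split].
        -- exists x, n. split; [|auto]. apply Pps_spec. split; [|split; auto].
           intros i. destruct (Nat.eq_dec (Nat.log2 n) i) as [<-|Hne].
           ++ rewrite Nat.clearbit_eq. split; [discriminate|lia].
           ++ rewrite Nat.clearbit_neq by auto. split; [|tauto]. intros Hb. split; auto.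
              destruct (lt_dec i (Nat.log2 n)); auto.
              rewrite Nat.bits_above_log2 in Hb by lia. discriminate.
        -- intros i Hi. unfold canon in Hi.
           destruct (Nat.eq_dec (Nat.log2 n) i) as [<-|Hne].
           ++ rewrite Nat.clearbit_eq in Hi. discriminate.
           ++ rewrite Nat.clearbit_neq in Hi by auto.
              destruct (lt_dec i (Nat.log2 n)).
              ** apply Hseg; auto.
              ** rewrite Nat.bits_above_log2 in Hi by lia. discriminate.
        -- unfold canon. rewrite Nat.pow2_bits_eqb. apply Nat.eqb_refl.
Qed.
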